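(* Let $\beta_0,n,\delta,\gamma,r>0$, $k=2e^{-\gamma r}$, and assume $\frac{\beta_0}{\delta}(k-1)=1$. Consider $$\dot{x}(t)=-\Big[\frac{\beta_0}{1+x(t)^n}+\delta\Big]x(t)+k\,\frac{\beta_0\,x(t-r)}{1+x(t-r)^n}$$ with initial data $x=\phi$ on $[-r,0]$. Then the equilibrium $x_1=0$ is stable in the following sense: for every $\varepsilon>0$ there exists $\eta>0$ such that for every continuous $\phi:[-r,0]\to[0,\infty)$ with $\sup_{s\in[-r,0]}|\phi(s)|<\eta$, the solution satisfies $0\le x(t,\phi)<\varepsilon$ for all $t>0$.
   Context: $x(t,\phi)$ denotes the (unique, global, nonnegative) solution with initial function $\phi$. *)

(* Defs.v *)
From Stdlib Require Import Reals Lra.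
Open Scope R_scope.

(* Real power x^a for a real exponent a > 0, used for x >= 0.
   Convention: rpow x a = x^a for x > 0 and 0 for x <= 0
   (for x = 0 this is the true value 0^a = 0 since a > 0;
    solutions are nonnegative so the value for x < 0 is immaterial). *)
Definition rpow (x a : R) : R :=
  if Rlt_dec 0 x then Rpower x a else 0.

Definition cont_on_closed (f : R -> R) (a b : R) : Prop :=
  forall t, a <= t <= b ->
    forall e, 0 < e -> exists d, 0 < d /\
      forall s, a <= s <= b -> Rabs (s - t) < d -> Rabs (f s - f t) < e.

Definition cont_on_from (f : R -> R) (a : R) : Prop :=
  forall t, a <= t ->
    forall e, 0 < e -> exists d, 0 < d /\
      forall s, a <= s -> Rabs (s - t) < d -> Rabs (f s - f t) < e.

Definition dde_rhs (beta0 n delta k : R) (xt xtr : R) : R :=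
  - (beta0 / (1 + rpow xt n) + delta) * xt
  + k * (beta0 * xtr / (1 + rpow xtr n)).

Definition is_solution (beta0 n delta k r : R) (phi x : R -> R) : Prop :=
  (forall t, -r <= t <= 0 -> x t = phi t) /\
  cont_on_from x (-r) /\
  (forall t, 0 < t ->
     derivable_pt_lim x t (dde_rhs beta0 n delta k (x t) (x (t - r)))).

(* Main.v *)
Require Import Defs.
From Stdlib Require Import Reals Lra Psatz.
Open Scope R_scope.

Lemma cont_of_eps (h : R -> R) s :
  (forall e, 0 < e -> exists d, 0 < d /\ forall y, Rabs (y - s) < d -> Rabs (h y - h s) < e) ->
  continuity_pt h s.
Proof.
  intros H e He. destruct (H e He) as [d [Hd Hy]]. exists d; split; auto.
  intros y [_ Hy']. simpl in *. unfold Rdist in *. apply Hy; auto.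
Qed.

Lemma mvt_eq (h h' : R -> R) a b : a < b ->
  (forall c, a <= c <= b -> continuity_pt h c) ->
  (forall c, a < c < b -> derivable_pt_lim h c (h' c)) ->
  exists c, a < c < b /\ h b - h a = h' c * (b - a).
Proof.
  intros Hab Hc Hd.
  pose (pr1 := fun c (P : a < c < b) => exist (fun l => derivable_pt_lim h c l) (h' c) (Hd c P)).
  pose (pr2 := fun c (P : a < c < b) => derivable_pt_id c).
  destruct (MVT h id a b pr1 pr2 Hab Hc) as [c [P E]].
  { intros; apply derivable_continuous_pt, derivable_pt_id. }
  exists c; split; auto.
  rewrite (derive_pt_eq_0 h c (h' c) (pr1 c P) (Hd c P)) in E.
  rewrite (derive_pt_eq_0 id c 1 (pr2 c P) (derivable_pt_lim_id c)) in E.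
  unfold id in E. lra.
Qed.

Lemma antideriv (g : R -> R) a b : a <= b -> (forall s, continuity_pt g s) ->
  exists P, forall s, a <= s <= b -> derivable_pt_lim P s (g s).
Proof.
  intros Hab Hg.
  assert (C0 : forall s, a <= s <= b -> continuity_pt g s) by (intros; apply Hg).
  exists (primitive Hab (FTC_P1 Hab C0)). intros s Hs.
  apply RiemannInt_P28; auto.
Qed.

Lemma left_lower (h : R -> R) c l a : a < c -> derivable_pt_lim h c l -> 0 < l ->
  exists y, a <= y < c /\ h y < h c.
Proof.
  intros Hac Hd Hl. destruct (Hd l Hl) as [del Hdel].
  set (hh := - Rmin (del/2) (c - a)).
  assert (Hm1 : Rmin (del/2) (c-a) <= del/2) by apply Rmin_l.
  assert (Hm2 : Rmin (del/2) (c-a) <= c - a) by apply Rmin_r.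
  assert (Hm3 : 0 < Rmin (del/2) (c-a)).
  { apply Rmin_glb_lt; [pose proof (cond_pos del); lra | lra]. }
  assert (Hh0 : hh <> 0) by (unfold hh; lra).
  assert (Hhd : Rabs hh < del).
  { unfold hh; rewrite Rabs_Ropp, Rabs_pos_eq by lra. pose proof (cond_pos del); lra. }
  specialize (Hdel hh Hh0 Hhd).
  exists (c + hh). split; [unfold hh; lra|].
  set (q := (h (c + hh) - h c) / hh) in *.
  assert (Hq : 0 < q) by (apply Rabs_def2 in Hdel; lra).
  assert (E : h (c + hh) - h c = q * hh) by (unfold q; field; auto).
  assert (hh < 0) by (unfold hh; lra). nra.
Qed.

Definition fb (b0 n u : R) : R := b0 * u / (1 + rpow u n).

Lemma rpow_nonneg u n : 0 <= rpow u n.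
Proof. unfold rpow; destruct (Rlt_dec 0 u); [unfold Rpower; left; apply exp_pos | lra]. Qed.

Lemma rpow_nonpos u n : u <= 0 -> rpow u n = 0.
Proof. intros; unfold rpow; destruct (Rlt_dec 0 u); lra. Qed.

Lemma fb_le b0 n u : 0 < b0 -> 0 <= u -> 0 <= fb b0 n u <= b0 * u.
Proof.
  intros Hb Hu. unfold fb. pose proof (rpow_nonneg u n).
  split.
  - unfold Rdiv; apply Rmult_le_pos; [nra| left; apply Rinv_0_lt_compat; lra].
  - apply Rmult_le_reg_r with (1 + rpow u n); [lra|].
    replace (b0 * u / (1 + rpow u n) * (1 + rpow u n)) with (b0 * u) by (field; lra). assert (0 <= b0 * u) by nra. nra.
Qed.

Lemma fb_cont b0 n u : continuity_pt (fb b0 n) u.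
Proof.
  destruct (Rtotal_order u 0) as [Hu|[Hu|Hu]].
  - apply continuity_pt_locally_ext with (f := fun v => b0 * v / (1 + 0)) (a := - u); [lra| |].
    + intros y Hy. unfold Rdist in Hy. apply Rabs_def2 in Hy. unfold fb. rewrite rpow_nonpos by lra. reflexivity.
    + apply continuity_pt_div; [apply continuity_pt_mult; [apply continuity_pt_const; intros ? ?; reflexivity| apply derivable_continuous_pt, derivable_pt_id] | apply continuity_pt_const; intros ? ?; reflexivity | lra].
  - subst u. apply cont_of_eps. intros e He.
    exists (e / (Rabs b0 + 1)). split.
    { apply Rdiv_lt_0_compat; [lra| pose proof (Rabs_pos b0); lra]. }
    intros y Hy. unfold fb. rewrite Rmult_0_r. unfold Rdiv at 2. rewrite Rmult_0_l, Rminus_0_r.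
    rewrite Rminus_0_r in Hy. pose proof (rpow_nonneg y n) as Hr.
    unfold Rdiv. rewrite Rabs_mult, Rabs_mult, Rabs_inv, (Rabs_pos_eq (1 + rpow y n)) by lra.
    assert (Hi : 0 < / (1 + rpow y n) <= 1).
    { split; [apply Rinv_0_lt_compat; lra|]. rewrite <- Rinv_1. apply Rinv_le_contravar; lra. }
    pose proof (Rabs_pos b0). pose proof (Rabs_pos y).
    assert (Rabs y * (Rabs b0 + 1) < e).
    { apply Rmult_lt_reg_r with (/ (Rabs b0 + 1)). apply Rinv_0_lt_compat; lra.
      rewrite Rmult_assoc, Rinv_r by lra. lra. }
    nra.
  - apply continuity_pt_locally_ext with (f := fun v => b0 * v / (1 + Rpower v n)) (a := u); [lra| |].
    + intros y Hy. unfold Rdist in Hy. apply Rabs_def2 in Hy. unfold fb, rpow.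
      destruct (Rlt_dec 0 y); [reflexivity| lra].
    + apply continuity_pt_div.
      * apply continuity_pt_mult; [apply continuity_pt_const; intros ? ?; reflexivity| apply derivable_continuous_pt, derivable_pt_id].
      * apply continuity_pt_plus; [apply continuity_pt_const; intros ? ?; reflexivity|].
        apply derivable_continuous_pt. exists (n * Rpower u (n - 1)). apply derivable_pt_lim_power; auto.
      * pose proof (exp_pos (n * ln u)). unfold Rpower. lra.
Qed.

Lemma Rmax_lip y s r : Rabs (Rmax y r - Rmax s r) <= Rabs (y - s).
Proof. unfold Rmax; destruct (Rle_dec y r), (Rle_dec s r); split_Rabs; lra. Qed.

Lemma x_cont (x : R -> R) r t : cont_on_from x (-r) -> -r < t -> continuity_pt x t.
Proof.
  intros Hx Ht. apply cont_of_eps. intros e He.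
  destruct (Hx t ltac:(lra) e He) as [d [Hd H]].
  exists (Rmin d (t + r)). split; [apply Rmin_glb_lt; lra|].
  intros y Hy. pose proof (Rmin_l d (t+r)); pose proof (Rmin_r d (t+r)).
  apply H; [apply Rabs_def2 in Hy; lra| lra].
Qed.

Lemma g_cont b0 n (x : R -> R) r : cont_on_from x (-r) ->
  forall s, continuity_pt (fun s => fb b0 n (x (Rmax s (-r)))) s.
Proof.
  intros Hx s.
  apply (continuity_pt_comp (fun s => x (Rmax s (-r))) (fb b0 n)); [|apply fb_cont].
  apply cont_of_eps. intros e He.
  destruct (Hx (Rmax s (-r)) (Rmax_r _ _) e He) as [d [Hd H]].
  exists d; split; auto. intros y Hy. apply H; [apply Rmax_r|].
  eapply Rle_lt_trans; [apply Rmax_lip| exact Hy].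
Qed.

Lemma sol_nonneg b0 n d k r phi x : 0 < b0 -> 0 < d -> 0 < k -> 0 < r ->
  (forall s, - r <= s <= 0 -> 0 <= phi s) ->
  is_solution b0 n d k r phi x -> forall t, -r <= t -> 0 <= x t.
Proof.
  intros Hb Hd Hk Hr Hphi [Hin [Hc Hder]].
  assert (Ind : forall m : nat, forall t, -r <= t <= INR m * r -> 0 <= x t).
  { induction m as [|m IH]; intros t Ht.
    - simpl in Ht. rewrite Hin by lra. apply Hphi; lra.
    - rewrite S_INR in Ht. pose proof (pos_INR m) as Hm.
      destruct (Rle_dec t (INR m * r)) as [Hle|Hgt]; [apply IH; lra|].
      destruct (Rle_lt_dec 0 (x t)) as [Hx|Hx]; auto. exfalso.
      set (a := INR m * r) in *.
      assert (Ha0 : 0 <= a) by (unfold a; nra).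
      destruct (continuity_ab_min x a t) as [c [Hmin Hcab]]; [lra| |].
      { intros c Hc'. apply (x_cont x r); auto; lra. }
      assert (Hxc : x c < 0) by (specialize (Hmin t ltac:(lra)); lra).
      assert (Hxa : 0 <= x a) by (apply IH; lra).
      assert (Hac : a < c) by (destruct (Req_dec a c); [subst; lra| lra]).
      assert (Hxr : 0 <= x (c - r)) by (apply IH; split; [lra|unfold a in *; lra]).
      specialize (Hder c ltac:(lra)).
      set (l := dde_rhs b0 n d k (x c) (x (c - r))) in Hder.
      assert (Hl : 0 < l).
      { unfold l, dde_rhs. rewrite (rpow_nonpos (x c)) by lra.
        pose proof (rpow_nonneg (x (c - r)) n).
        assert (0 <= b0 * x (c - r) / (1 + rpow (x (c - r)) n)).
        { unfold Rdiv; apply Rmult_le_pos; [nra| left; apply Rinv_0_lt_compat; lra]. }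
        replace (b0 / (1 + 0)) with b0 by field. nra. }
      destruct (left_lower x c l a Hac Hder Hl) as [y [Hy1 Hy2]].
      specialize (Hmin y ltac:(lra)). lra. }
  intros t Ht. destruct (INR_unbounded (t / r)) as [m Hm].
  apply (Ind m). split; auto.
  apply Rmult_gt_compat_r with (r := r) in Hm; auto.
  unfold Rdiv in Hm. rewrite Rmult_assoc, Rinv_l in Hm by lra. lra.
Qed.

Theorem mainTheorem4 :
  forall beta0 n delta gamma r : R,
    0 < beta0 -> 0 < n -> 0 < delta -> 0 < gamma -> 0 < r ->
    (beta0 / delta) * (2 * exp (- (gamma * r)) - 1) = 1 ->
    forall eps : R, 0 < eps ->
      exists eta : R, 0 < eta /\
        forall phi x : R -> R,
          cont_on_closed phi (- r) 0 ->
          (forall s, - r <= s <= 0 -> 0 <= phi s) ->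
          (forall s, - r <= s <= 0 -> Rabs (phi s) < eta) ->
          is_solution beta0 n delta (2 * exp (- (gamma * r))) r phi x ->
          forall t, 0 < t -> 0 <= x t < eps.
Proof.
  intros b0 n d g r Hb Hn Hd Hg Hr Hcond eps He.
  set (k := 2 * exp (- (g * r))) in *.
  assert (Hk1 : b0 * (k - 1) = d).
  { replace (b0 * (k - 1)) with ((b0 / d) * (k - 1) * d) by (field; lra).
    rewrite Hcond; ring. }
  assert (Hkp : 1 < k) by (destruct (Rle_lt_dec k 1); [nra | auto]).
  assert (Hden : 0 < 1 + k * b0 * r) by (assert (0 < k * b0 * r) by (apply Rmult_lt_0_compat; [nra|lra]); lra).
  exists (eps / (1 + k * b0 * r)). split; [apply Rdiv_lt_0_compat; lra|].
  set (eta := eps / (1 + k * b0 * r)).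
  intros phi x Hpc Hphi Hphb Hsol t Ht.
  assert (Hnn := sol_nonneg b0 n d k r phi x Hb Hd ltac:(lra) Hr Hphi Hsol).
  destruct Hsol as [Hin [Hc Hder]] eqn:Hsol'.
  split; [apply Hnn; lra|].
  set (gg := fun s => fb b0 n (x (Rmax s (-r)))).
  destruct (antideriv gg (-r-1) (t+1) ltac:(lra) (g_cont b0 n x r Hc)) as [P HP].
  assert (HPc : forall s, -r-1 < s < t+1 -> continuity_pt P s).
  { intros s Hs. apply derivable_continuous_pt. exists (gg s). apply HP; lra. }
  assert (Hgg : forall s, -r <= s -> gg s = fb b0 n (x s)).
  { intros s Hs. unfold gg. rewrite Rmax_left by lra. reflexivity. }
  assert (HP1 : 0 <= P t - P (t - r)).
  { destruct (mvt_eq P gg (t - r) t ltac:(lra)) as [c [Hc1 Hc2]].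
    - intros; apply HPc; lra.
    - intros; apply HP; lra.
    - rewrite Hc2, Hgg by lra. pose proof (fb_le b0 n (x c) Hb (Hnn c ltac:(lra))). nra. }
  assert (HP2 : P 0 - P (- r) <= b0 * eta * r).
  { destruct (mvt_eq P gg (- r) 0 ltac:(lra)) as [c [Hc1 Hc2]].
    - intros; apply HPc; lra.
    - intros; apply HP; lra.
    - rewrite Hc2, Hgg by lra. rewrite Hin by lra.
      pose proof (fb_le b0 n (phi c) Hb (Hphi c ltac:(lra))) as F1.
      pose proof (Hphb c ltac:(lra)) as F2. apply Rabs_def2 in F2.
      assert (fb b0 n (phi c) <= b0 * eta) by nra. nra. }
  set (V := fun s => x s + k * (P s - P (s - r))).
  assert (HV : V t - V 0 <= 0).
  { destruct (mvt_eq V (fun c => dde_rhs b0 n d k (x c) (x (c - r)) + k * (gg c - gg (c - r) * 1)) 0 t Ht) as [c [Hc1 Hc2]].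
    - intros c Hc'. unfold V. apply continuity_pt_plus; [apply (x_cont x r); auto; lra|].
      apply continuity_pt_mult; [apply continuity_pt_const; intros ? ?; reflexivity|].
      apply continuity_pt_minus; [apply HPc; lra|].
      apply (continuity_pt_comp (fun s => s - r) P).
      + apply continuity_pt_minus; [apply derivable_continuous_pt, derivable_pt_id|apply continuity_pt_const; intros ? ?; reflexivity].
      + apply HPc; lra.
    - intros c Hc'. unfold V. apply derivable_pt_lim_plus; [apply Hder; lra|].
      apply derivable_pt_lim_scal. apply derivable_pt_lim_minus; [apply HP; lra|].
      apply (derivable_pt_lim_comp (fun s => s - r) P).
      + replace 1 with (1 - 0) by ring. apply derivable_pt_lim_minus; [apply derivable_pt_lim_id|apply derivable_pt_lim_const].
      + apply HP; lra.
    - rewrite Hc2. match goal with |- ?D * _ <= 0 => cut (D <= 0); [intros; nra|] end.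
      rewrite !Hgg by lra. unfold dde_rhs, fb.
      set (X := x c). set (Y := x (c - r)).
      assert (HX : 0 <= X) by (apply Hnn; lra).
      pose proof (rpow_nonneg X n). set (R1 := rpow X n) in *.
      set (q := X / (1 + R1)).
      assert (Hq : q <= X).
      { unfold q. apply Rmult_le_reg_r with (1 + R1); [lra|].
        replace (X / (1 + R1) * (1 + R1)) with X by (field; lra). nra. }
      pose proof (rpow_nonneg Y n).       replace (- (b0 / (1 + R1) + d) * X + k * (b0 * Y / (1 + rpow Y n)) +
         k * (b0 * X / (1 + R1) - b0 * Y / (1 + rpow Y n) * 1))
        with (b0 * (k - 1) * q - d * X) by (unfold q; field; lra).
      rewrite Hk1. nra. }
  assert (Hx0 : x 0 < eta).
  { rewrite Hin by lra. pose proof (Hphb 0 ltac:(lra)) as F3. apply Rabs_def2 in F3. lra. }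
  unfold V in HV. replace (0 - r) with (- r) in HV by ring.
  assert (Heta : eta * (1 + k * b0 * r) = eps) by (unfold eta; field; lra).
  assert (k * (P 0 - P (- r)) <= k * (b0 * eta * r)) by (apply Rmult_le_compat_l; lra).
  assert (0 <= k * (P t - P (t - r))) by (apply Rmult_le_pos; lra).
  nra.
Qed.
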